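(* Let $s\ge3$ and $k\ge1$ be integers and let $T$ be a tree with every vertex of degree at most $s$ and with $v(T)\ge k+1$. Then $T$ has a branch $B$ such that $v(B)\le (s-1)k+1$ and $\tau_k(B)=1$.
   Context: All graphs are finite and simple; $v(\cdot)$ is the number of vertices. A branch of a tree $T$ is a subtree $B$ of $T$ such that either $B=T$ or $T-V(B)$ is also a (nonempty) tree. For $k\ge1$, $\tau_k(G)$ denotes the maximum number of pairwise vertex-disjoint subgraphs of $G$ each of which is a tree with exactly $k$ edges. *)

(* Defs.v *)
From mathcomp Require Import all_boot.
From Stdlib Require Import ClassicalDescription.
Set Implicit Arguments. Unset Strict Implicit. Unset Printing Implicit Defensive.

Section Graphs.
Variable T : finType.

(* A (simple) graph on the finite type T is given by a vertex set V : {set T}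
   and an adjacency relation E (symmetric, irreflexive, endpoints in V). *)

Definition induced (E : rel T) (W : {set T}) : rel T :=
  [rel x y | [&& E x y, x \in W & y \in W]].

Definition subgraph (W : {set T}) (F : rel T) (V : {set T}) (E : rel T) : Prop :=
  W \subset V /\ symmetric F /\
  (forall x y, F x y -> [&& E x y, x \in W & y \in W]).

Definition connected_on (W : {set T}) (F : rel T) : Prop :=
  forall x y, x \in W -> y \in W -> connect (induced F W) x y.

Definition acyclic (W : {set T}) (F : rel T) : Prop :=
  ~ exists c : seq T, [/\ uniq c, 2 < size c, all (fun x => x \in W) c
                        & cycle (induced F W) c].

Definition is_tree (W : {set T}) (F : rel T) : Prop :=
  W != set0 /\ connected_on W F /\ acyclic W F.

Definition nedges (W : {set T}) (F : rel T) : nat :=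
  #|[set [set x; y] | x in W, y in W & F x y]|.

Definition tree_packing (k : nat) (V : {set T}) (E : rel T) (m : nat) : Prop :=
  exists P : 'I_m -> ({set T} * rel T),
    (forall i, [/\ subgraph (P i).1 (P i).2 V E, is_tree (P i).1 (P i).2
                 & nedges (P i).1 (P i).2 = k]) /\
    (forall i j, i != j -> [disjoint (P i).1 & (P j).1]).

Definition propb (P : Prop) : bool :=
  if excluded_middle_informative P then true else false.

(* tau_k(V, E): the maximum size of such a packing (each tree is nonempty and
   they are disjoint, so the size is at most #|V|). *)
Definition tau (k : nat) (V : {set T}) (E : rel T) : nat :=
  \max_(m < #|V|.+1 | propb (tree_packing k V E m)) m.

Definition branch (e : rel T) (S : {set T}) (F : rel T) : Prop :=
  subgraph S F [set: T] e /\ is_tree S F /\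
  ((S = [set: T] /\ forall x y, F x y = e x y) \/ is_tree (~: S) (induced e (~: S))).

End Graphs.

(* Main.v *)
Require Import Defs.
From mathcomp Require Import all_boot zify.
From Stdlib Require Import ClassicalDescription.
Set Implicit Arguments. Unset Strict Implicit. Unset Printing Implicit Defensive.

Section G.
Variable T : finType.
Implicit Types (W A : {set T}) (F R : rel T).

Lemma closure R (A : {pred T}) x y :
  (forall a b, R a b -> a \in A -> b \in A) -> x \in A -> connect R x y -> y \in A.
Proof.
move=> cl xA /connectP[p pP ->]; elim: p x xA pP => //= z p IH x xA /andP[rxz pp].
exact: IH (cl _ _ rxz xA) pp.
Qed.

Lemma connect_in F W a b : connect (induced F W) a b -> a != b -> b \in W.
Proof.
move=> c nab; have := @closure (induced F W) (a |: W) a b.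
have cl : forall x y, induced F W x y -> x \in a |: W -> y \in a |: W.
  by move=> x y /= /and3P[_ _ yW] _; rewrite setU1r.
move=> /(_ cl (setU11 _ _) c); by rewrite in_setU1 eq_sym (negbTE nab).
Qed.

Lemma connect_mono R R' x y : (forall a b, R a b -> R' a b) -> connect R x y -> connect R' x y.
Proof. by move=> h; apply: connect_sub => a b /h /connect1. Qed.

Lemma induced_sym F W : symmetric F -> symmetric (induced F W).
Proof. by move=> sF x y; rewrite /induced /= [F x y]sF; case: (x \in W); case: (y \in W); rewrite /= ?andbT ?andbF. Qed.

Lemma induced_idem F W : induced (induced F W) W =2 induced F W.
Proof. by move=> x y; rewrite /induced /=; case: (F x y); case: (x \in W); case: (y \in W). Qed.

Lemma acyclic_mono W F (V : {set T}) (E : rel T) : W \subset V ->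
  (forall x y, F x y -> x \in W -> y \in W -> E x y) -> acyclic V E -> acyclic W F.
Proof.
move=> sWV h ac [c [u s2 aW cy]]; apply: ac; exists c; split => //.
  by apply/allP => x /(allP aW) /(subsetP sWV).
apply: sub_cycle cy => x y; rewrite /induced /= => /and3P[fxy xW yW].
by rewrite h // (subsetP sWV _ xW) (subsetP sWV _ yW).
Qed.
Lemma leaf_aux W F : symmetric F -> (forall x, ~~ F x x) -> acyclic W F ->
  forall n x0 p, #|W| - size (x0 :: p) < n -> uniq (x0 :: p) ->
  all (fun x => x \in W) (x0 :: p) -> path (induced F W) x0 p ->
  exists x0 x1, x0 \in W /\ forall y, y \in W -> F x0 y -> y = x1.
Proof.
move=> sF irr ac; elim=> // n IH x0 p hn up aW pp.
have x0W : x0 \in W by move: aW => /= /andP[].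
case: (pickP [pred y | [&& y \in W, F x0 y & y \notin x0 :: p]]) => [y /and3P[yW fy ny]|none].
  have aW' : all (fun x => x \in W) (y :: x0 :: p) by rewrite /= yW.
  have up' : uniq (y :: x0 :: p) by rewrite /= ny.
  apply: (IH y (x0 :: p)) => //=.
  - have: size (y :: x0 :: p) <= #|W|.
      rewrite cardE; apply: uniq_leq_size => // z /(allP aW').
      by rewrite mem_enum.
    by move: hn => /=; lia.
  - by rewrite /induced /= sF fy yW x0W.
exists x0, (head x0 p); split=> // y yW fy.
have: y \in x0 :: p by move: (none y) => /=; rewrite yW fy /= => /negbFE.
rewrite in_cons => /orP[/eqP yx0|yp]; first by move: (irr x0); rewrite -{2}yx0 fy.
move: pp up aW; case/splitPr: yp => p1 p2.
case: p1 => [//|z1 p1] pp up aW; exfalso; apply: ac.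
exists (x0 :: rcons (z1 :: p1) y); split.
- by move: up; rewrite -cat_rcons -cat_cons cat_uniq => /andP[].
- by rewrite /= size_rcons.
- by move: aW; rewrite -cat_rcons -cat_cons all_cat => /andP[].
- move: pp; rewrite -cat_rcons cat_path => /andP[pp _].
  rewrite /cycle rcons_path pp /= last_rcons /induced /= sF fy yW x0W.
  done.
Qed.

Lemma leaf W F : symmetric F -> (forall x, ~~ F x x) -> acyclic W F -> W != set0 ->
  exists x0 x1, x0 \in W /\ forall y, y \in W -> F x0 y -> y = x1.
Proof.
move=> sF irr ac /set0Pn[x xW].
by apply: (leaf_aux sF irr ac (n := #|W|.+1) (x0 := x) (p := [::])) => //=; [lia | rewrite xW].
Qed.

Lemma edges_mem W F E : E \in [set [set x; y] | x in W, y in W & F x y] ->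
  exists x y, [/\ x \in W, y \in W, F x y & E = [set x; y]].
Proof. by case/imset2P=> x y xW; rewrite inE => /andP[yW fxy] ->; exists x, y. Qed.

Lemma edges_in W F x y : x \in W -> y \in W -> F x y ->
  [set x; y] \in [set [set x; y] | x in W, y in W & F x y].
Proof. by move=> xW yW fxy; apply/imset2P; exists x y => //; rewrite inE yW. Qed.

Lemma nedges_le W F : symmetric F -> (forall x, ~~ F x x) -> acyclic W F -> W != set0 ->
  (nedges W F).+1 <= #|W|.
Proof.
move=> sF irr; have [n] := ubnP #|W|; elim: n W => // n IH W hn ac ne.
have [x0 [x1 [x0W lf]]] := leaf sF irr ac ne.
have sub : [set [set x; y] | x in W, y in W & F x y] \subset
    [set x0; x1] |: [set [set x; y] | x in W :\ x0, y in W :\ x0 & F x y].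
  apply/subsetP => E /edges_mem[x [y [xW yW fxy ->]]].
  case: (eqVneq x x0) => [ex|nx].
    by move: fxy; rewrite ex => /(lf _ yW) ->; rewrite setU11.
  case: (eqVneq y x0) => [ey|ny].
    by move: fxy; rewrite ey sF => /(lf _ xW) ->; rewrite setUC setU11.
  by apply/setU1P; right; apply: edges_in; rewrite // !inE ?nx ?ny.
have cW : #|W| = (#|W :\ x0|).+1 by rewrite (cardsD1 x0 W) x0W.
case: (eqVneq (W :\ x0) set0) => [e0|ne'].
  suff -> : nedges W F = 0 by rewrite cW.
  apply/eqP; rewrite cards_eq0; apply/eqP/setP => E; rewrite inE.
  apply/negbTE/negP => /edges_mem[x [y [xW yW fxy _]]].
  have ex : x = x0.
    apply/eqP; apply: contraT => nx; have : x \in W :\ x0 by rewrite !inE nx.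
    by rewrite e0 inE.
  have ey : y = x0.
    apply/eqP; apply: contraT => ny; have : y \in W :\ x0 by rewrite !inE ny.
    by rewrite e0 inE.
  by move: (irr x); rewrite {2}ex -ey fxy.
have ac' : acyclic (W :\ x0) F.
  by apply: acyclic_mono ac; [apply: subD1set | move=> x y ->].
have := IH (W :\ x0) _ ac' ne'.
have := subset_leq_card sub; rewrite cardsU1 /nedges.
move: hn; rewrite cW; lia.
Qed.

Lemma grow B F : symmetric F -> connected_on B F -> forall j, 0 < j -> j <= #|B| ->
  exists W, [/\ W \subset B, #|W| = j, connected_on W F & j.-1 <= nedges W F].
Proof.
move=> sF cB; elim=> // j IH _ hj.
case: j IH hj => [_ hj|j IH hj].
  have /card_gt0P[x xB] : 0 < #|B| by [].
  exists [set x]; split; rewrite ?sub1set ?cards1 //.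
  by move=> a b; rewrite !inE => /eqP-> /eqP->; apply: connect0.
have [W [sWB cW conW nW]] := IH isT (ltnW hj).
have: exists z y, [/\ z \in W, y \in B, y \notin W & F z y].
  case: (pickP [pred p : T * T | [&& p.1 \in W, p.2 \in B, p.2 \notin W & F p.1 p.2]]).
    by move=> [z y] /and4P[*]; exists z, y.
  move=> none; exfalso.
  have /card_gt0P[x xW] : 0 < #|W| by rewrite cW.
  have [y /andP[yB yW]] : exists y, (y \in B) && (y \notin W).
    apply/existsP; apply: contraT; rewrite negb_exists => /forallP h.
    have : B \subset W by apply/subsetP => a aB; move: (h a); rewrite aB /= negbK.
    by move/subset_leq_card; rewrite cW; lia.
  suff : y \in W by rewrite (negbTE yW).
  apply: (@closure (induced F B) W x y) => //.
    move=> a b; rewrite /induced /= => /and3P[fab aB bB] aW.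
    apply: contraT => bW; move: (none (a, b)); rewrite /= aW bB bW fab.
    done.
  exact: cB (subsetP sWB _ xW) yB.
move=> [z [y [zW yB yW fzy]]].
exists (y |: W); split.
- by rewrite subUset sub1set yB sWB.
- by rewrite cardsU1 yW cW.
- have sym' : connect_sym (induced F (y |: W)) by apply/sym_connect_sym/induced_sym.
  have lift : forall a b, a \in W -> b \in W -> connect (induced F (y |: W)) a b.
    move=> a b aW bW; apply: connect_mono (conW a b aW bW) => c d.
    by rewrite /induced /= => /and3P[-> cW' dW']; rewrite !setU1r.
  have ty : forall a, a \in W -> connect (induced F (y |: W)) y a.
    move=> a aW; apply: connect_trans (lift z a zW aW); apply: connect1.
    by rewrite /induced /= sF fzy setU11 setU1r.
  move=> a b; rewrite !in_setU1 => /orP[/eqP->|aW] /orP[/eqP->|bW].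
  + exact: connect0.
  + exact: ty.
  + by rewrite sym'; apply: ty.
  + exact: lift.
- have sub : [set z; y] |: [set [set x; y] | x in W, y in W & F x y] \subset
      [set [set x; y0] | x in y |: W, y0 in y |: W & F x y0].
    rewrite subUset sub1set; apply/andP; split.
      apply: edges_in => //; [exact: setU1r | exact: setU11].
    apply/subsetP => E /edges_mem[a [b [aW bW fab ->]]].
    by apply: edges_in; rewrite ?setU1r.
  have := subset_leq_card sub; rewrite cardsU1.
  have -> : ([set z; y] \in [set [set x; y] | x in W, y in W & F x y]) = false.
    apply/negbTE/negP => /edges_mem[a [b [aW bW _ e]]].
    have : y \in [set a; b] by rewrite -e !inE eqxx orbT.
    by rewrite !inE => /orP[/eqP ya|/eqP yb]; move: yW; rewrite ?ya ?yb ?aW ?bW.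
  by move: nW; rewrite /nedges /=; lia.
Qed.

Lemma piece_big k B F W F' : (forall x y, F x y -> x != y) ->
  subgraph W F' B F -> is_tree W F' -> nedges W F' = k -> k < #|W|.
Proof.
move=> irr [sWB [sF' hF']] [ne [_ ac]] <-.
apply: nedges_le => // x; apply/negP => /hF' /and3P[/irr]; rewrite eqxx.
done.
Qed.

Lemma packing1 k B F : symmetric F -> connected_on B F -> acyclic B F ->
  (forall x, ~~ F x x) -> k < #|B| -> tree_packing k B F 1.
Proof.
move=> sF cB ac irr hk.
have [W [sWB cW conW nW]] := grow sF cB (j := k.+1) isT hk.
have acW : acyclic W (induced F W).
  apply: acyclic_mono ac => // x y; rewrite /induced /= => /and3P[-> _ _].
  done.
exists (fun _ => (W, induced F W)); split => [i|i j]; last first.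
  by rewrite !ord1 eqxx.
have neW : W != set0 by rewrite -card_gt0 cW.
split => //=.
- split => //; split; first exact: induced_sym.
  by move=> x y; rewrite /induced /= => /and3P[-> -> ->].
- split=> //; split=> // x y xW yW.
  by rewrite (eq_connect (@induced_idem F W)); apply: conW.
- have e : nedges W (induced F W) = nedges W F.
    rewrite /nedges; apply: eq_card => E.
    apply/idP/idP => /edges_mem[x [y [xW yW fxy ->]]]; apply: edges_in => //.
      by move: fxy; rewrite /induced /= => /and3P[].
    by rewrite /induced /= fxy xW yW.
  have irr' : forall x, ~~ induced F W x x.
    by move=> x; rewrite /induced /= (negbTE (irr x)).
  have := nedges_le (induced_sym W sF) irr' acW neW.
  rewrite e cW => h; move: nW => /= nW.
  by apply/eqP; rewrite eqn_leq nW -ltnS h.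
Qed.

Lemma two_pieces k B F m : tree_packing k B F m -> 1 < m ->
  exists W0 F0 W1 F1, [/\ [/\ subgraph W0 F0 B F, is_tree W0 F0 & nedges W0 F0 = k],
    [/\ subgraph W1 F1 B F, is_tree W1 F1 & nedges W1 F1 = k] & [disjoint W0 & W1]].
Proof.
move=> [P [hP dP]] hm.
have h0 : 0 < m by lia.
have [a1 b1 c1] := hP (Ordinal h0); have [a2 b2 c2] := hP (Ordinal hm).
exists (P (Ordinal h0)).1, (P (Ordinal h0)).2, (P (Ordinal hm)).1, (P (Ordinal hm)).2.
by split => //; apply: dP.
Qed.

Lemma tau_one k B F : tree_packing k B F 1 -> (forall m, 1 < m -> ~ tree_packing k B F m) ->
  0 < #|B| -> tau k B F = 1.
Proof.
move=> h1 hn hB; apply/eqP; rewrite eqn_leq; apply/andP; split.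
  apply/bigmax_leqP => i; rewrite /propb; case: excluded_middle_informative => // hp _.
  by apply: contraT; rewrite -ltnNge => /hn.
have := @leq_bigmax_cond _ (fun m : 'I_#|B|.+1 => propb (tree_packing k B F m))
   (fun m => nat_of_ord m) (Ordinal (hB : 1 < #|B|.+1)).
rewrite /propb; case: excluded_middle_informative => // _ /(_ isT).
done.
Qed.

Lemma path_in F W a p : path (induced F W) a p -> all (fun x => x \in W) p.
Proof.
elim: p a => //= b p IH a /andP[]; rewrite /induced /= => /and3P[_ _ ->] /IH.
done.
Qed.

Section Tree.
Variable e : rel T.
Hypothesis se : symmetric e.
Hypothesis ie : irreflexive e.
Hypothesis conT : connected_on [set: T] e.
Hypothesis acT : acyclic [set: T] e.

Definition comp_def u v := [set x | connect (induced e (~: [set u])) v x].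
Fact comp_key : unit. Proof. exact: tt. Qed.
Definition comp := locked_with comp_key comp_def.
Lemma in_comp u v x : (x \in comp u v) = connect (induced e (~: [set u])) v x.
Proof. by rewrite /comp locked_withE /comp_def inE. Qed.

Lemma comp_v u v : v \in comp u v.
Proof. by rewrite in_comp connect0. Qed.

Lemma e_neq x y : e x y -> x != y.
Proof. by apply: contraTneq => ->; rewrite ie. Qed.

Lemma comp_neq u v x : u != v -> x \in comp u v -> x != u.
Proof.
move=> nuv; rewrite in_comp => c; case: (eqVneq v x) => [<-|nvx]; first by rewrite eq_sym.
by move: (connect_in c nvx); rewrite !inE.
Qed.

Lemma comp_step u v x y : u != v -> x \in comp u v -> e x y -> y != u -> y \in comp u v.
Proof.
move=> nuv xc exy nyu; have nxu := comp_neq nuv xc.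
move: xc; rewrite !in_comp => c; apply: connect_trans c _; apply: connect1.
by rewrite /induced /= exy !inE nxu nyu.
Qed.

Lemma cycA c a w : e c a -> e c w -> w != a -> w \in comp c a -> False.
Proof.
move=> eca ecw nwa; rewrite in_comp => /connectP[p0 pp0 wl].
case: (shortenP pp0) wl => p pp up _ wl.
apply: acT; exists (c :: a :: p); split.
- rewrite /= in up *; rewrite up andbT.
  rewrite inE negb_or (e_neq eca) /=.
  apply/negP => cp; move: (allP (path_in pp) c cp); rewrite !inE eqxx.
  done.
- case: p pp up wl => [|b p] //= _ _ wla; by move: nwa; rewrite wla eqxx.
- by apply/allP => x; rewrite inE.
- rewrite /cycle /= rcons_path; apply/and3P; split.
  + by rewrite /induced /= eca !inE.
  + by apply: sub_path pp => x y; rewrite /induced /= => /and3P[-> _ _]; rewrite !inE.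
  + by rewrite -wl /induced /= se ecw !inE.
Qed.


Lemma comp_conn u v x : u != v -> x \in comp u v -> connect (induced e (comp u v)) v x.
Proof.
move=> nuv; rewrite in_comp => c.
have := @closure (induced e (~: [set u]))
   [set y | (y \in comp u v) && connect (induced e (comp u v)) v y] v x.
rewrite !inE comp_v connect0 => /(_ _ isT c) /andP[] // => a b Rab; rewrite !inE => /andP[ac ca].
have bc : b \in comp u v.
  move: ac; rewrite !in_comp => ac; exact: connect_trans ac (connect1 Rab).
rewrite bc; apply: connect_trans ca (connect1 _).
by move: Rab; rewrite /induced /= ac bc => /and3P[-> _ _].
Qed.

Lemma comp_connected u v : u != v -> connected_on (comp u v) (induced e (comp u v)).
Proof.
move=> nuv x y xc yc; rewrite (eq_connect (@induced_idem e _)).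
have sym' := sym_connect_sym (induced_sym (comp u v) se).
by apply: connect_trans (comp_conn nuv yc); rewrite sym'; apply: comp_conn.
Qed.

Lemma comp_disj u v x : e u v -> x \in comp u v -> x \in comp v u -> False.
Proof.
move=> euv xS xS'; have nuv := e_neq euv; have nvu : v != u by rewrite eq_sym.
suff : x \in [set y | y \notin comp v u] by rewrite inE xS'.
apply: (@closure (induced e (comp u v)) _ v x _ _ (comp_conn nuv xS)); last first.
  by rewrite inE; apply/negP => /(comp_neq nvu); rewrite eqxx.
move=> a b; rewrite /induced /= !inE => /and3P[eab aS bS] naS'; apply/negP => bS'.
case: (eqVneq a v) => [av|nav].
  have evu : e v u by rewrite se.
  subst a; apply: (cycA evu eab) bS'.
  by apply: comp_neq nuv bS.
by move: naS'; rewrite (comp_step nvu bS' _ nav) // se.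
Qed.

Lemma comp_cover u v x : e u v -> (x \in comp u v) || (x \in comp v u).
Proof.
move=> euv; have nuv := e_neq euv; have nvu : v != u by rewrite eq_sym.
suff : x \in comp u v :|: comp v u by rewrite inE.
apply: (@closure (induced e [set: T]) _ u x _ _ (conT (in_setT u) (in_setT x))).
  move=> a b; rewrite /induced /= => /and3P[eab _ _]; rewrite !inE => /orP[aS|aS'].
    case: (eqVneq b u) => [->|nbu]; first by rewrite comp_v orbT.
    by rewrite (comp_step nuv aS eab nbu).
  case: (eqVneq b v) => [->|nbv]; first by rewrite comp_v.
  by rewrite (comp_step nvu aS' eab nbv) orbT.
by rewrite inE comp_v orbT.
Qed.

Lemma comp_compl u v : e u v -> ~: comp u v = comp v u.
Proof.
move=> euv; apply/setP => x; rewrite inE.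
have := comp_cover x euv; case: (boolP (x \in comp u v)) => //= xS _.
by apply/esym/negP => xS'; apply: (comp_disj euv xS xS').
Qed.

Lemma comp_proper u v w : e u v -> e v w -> w != u -> comp v w \proper comp u v.
Proof.
move=> euv evw nwu; have nuv := e_neq euv; have nvw := e_neq evw.
apply/properP; split; last first.
  exists v; rewrite ?comp_v //; apply/negP => /(comp_neq nvw); rewrite eqxx.
  done.
apply/subsetP => x; rewrite [x \in comp v w]in_comp => c.
apply: (@closure (induced e (~: [set v])) _ w x _ _ c); last first.
  exact: comp_step nuv (comp_v u v) evw nwu.
move=> a b; rewrite /induced /= !inE => /and3P[eab nav nbv] aS.
case: (eqVneq b u) => [bu|nbu]; last exact: comp_step nuv aS eab nbu.
exfalso; subst b; apply: (cycA euv _ nav aS); by rewrite se.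
Qed.

Definition nbr u v := [set w | e v w & w != u].

Lemma comp_cover2 u v : e u v -> comp u v \subset v |: \bigcup_(w in nbr u v) comp v w.
Proof.
move=> euv; have nuv := e_neq euv.
apply/subsetP => x; rewrite [x \in comp u v]in_comp => c.
apply: (@closure (induced e (~: [set u])) _ v x _ _ c); last by rewrite setU11.
move=> a b; rewrite /induced /= => /and3P[eab nau nbu].
move: nau nbu; rewrite !in_setC !in_set1 => nau nbu.
case/setU1P => [av|/bigcupP[w]].
  subst a; apply/setU1P; right; apply/bigcupP; exists b; last exact: comp_v.
  by rewrite inE eab nbu.
rewrite inE => /andP[evw nwu] aC.
case: (eqVneq b v) => [->|nbv]; first by rewrite setU11.
apply/setU1P; right; apply/bigcupP; exists w; first by rewrite inE evw nwu.
exact: comp_step (e_neq evw) aC eab nbv.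
Qed.

Lemma comp_tree u v : e u v -> is_tree (comp u v) (induced e (comp u v)).
Proof.
move=> euv; split; first by apply/set0Pn; exists v; apply: comp_v.
split; first exact: comp_connected (e_neq euv).
by apply: acyclic_mono acT; [apply: subsetT | move=> x y; rewrite /induced /= => /and3P[]].
Qed.

Lemma card_bigcup_le (N : {set T}) (C : T -> {set T}) k :
  (forall w, w \in N -> #|C w| <= k) -> #|\bigcup_(w in N) C w| <= #|N| * k.
Proof.
move=> h; rewrite -sum_nat_const.
apply: (big_ind2 (fun (A : {set T}) n => #|A| <= n)) => //.
  by rewrite cards0.
move=> A1 n1 A2 n2 h1 h2; apply: leq_trans (leq_card_setU _ _) _.
exact: leq_add.
Qed.

Lemma piece_sub u v W F' : e u v -> subgraph W F' (comp u v) (induced e (comp u v)) ->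
  is_tree W F' -> v \notin W -> exists w, w \in nbr u v /\ W \subset comp v w.
Proof.
move=> euv [sWB [_ hF]] [/set0Pn[x0 x0W] [conW _]] nvW.
have := subsetP (comp_cover2 euv) x0 (subsetP sWB _ x0W).
case/setU1P => [x0v|/bigcupP[w wN x0C]]; first by move: nvW; rewrite -x0v x0W.
exists w; split => //; apply/subsetP => y yW.
have evw : e v w by move: wN; rewrite inE => /andP[].
apply: (@closure (induced F' W) _ x0 y _ x0C (conW _ _ x0W yW)).
move=> a b; rewrite /induced /= => /and3P[fab aW bW] aC.
have := hF _ _ fab; rewrite /induced /= => /and3P[/and3P[eab _ _] _ _].
apply: comp_step (e_neq evw) aC eab _.
by apply: contraNneq nvW => <-.
Qed.

Lemma main s k : 3 <= s -> 1 <= k -> is_tree [set: T] e ->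
  (forall v : T, #|[set u | e v u]| <= s) -> k.+1 <= #|T| ->
  exists (S : {set T}) (F : rel T),
    [/\ branch e S F, #|S| <= (s - 1) * k + 1 & tau k S F = 1].
Proof.
move=> s3 k1 tr hdeg hk.
have irr : forall x, ~~ e x x by move=> x; rewrite ie.
case: (pickP [pred p : T * T | e p.1 p.2 && (k < #|comp p.1 p.2|)]) => [p0 hp0|none].
  case: (arg_minnP (fun p : T * T => #|comp p.1 p.2|) hp0) => [[u v]] /andP[/= euv hkB] hmin.
  have nuv := e_neq euv.
  set B := comp u v.
  have small : forall w, w \in nbr u v -> #|comp v w| <= k.
    move=> w; rewrite inE => /andP[evw nwu]; rewrite leqNgt; apply/negP => hw.
    have := hmin (v, w); rewrite /= evw hw => /(_ isT).
    by rewrite leqNgt (proper_card (comp_proper euv evw nwu)).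
  exists B, (induced e B); split.
  - split; first by split; [apply: subsetT | split; [apply: induced_sym | move=> x y; rewrite /induced /= => /and3P[-> -> ->]]].
    split; first exact: comp_tree.
    by right; rewrite comp_compl //; apply: comp_tree; rewrite se.
  - apply: leq_trans (subset_leq_card (comp_cover2 euv)) _.
    rewrite cardsU1; apply: leq_trans (leq_add (leq_b1 _) (card_bigcup_le small)) _.
    have : #|nbr u v| <= s - 1.
      have sub : nbr u v \subset [set w | e v w] :\ u.
        by apply/subsetP => w; rewrite !inE => /andP[-> ->].
      apply: leq_trans (subset_leq_card sub) _.
      have := hdeg v; rewrite (cardsD1 u [set w | e v w]) inE se euv; lia.
    move=> hn; rewrite addnC leq_add2r; exact: leq_mul.
  - apply: tau_one; last by apply/card_gt0P; exists v; apply: comp_v.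
      apply: packing1 => //.
      - exact: induced_sym.
      - exact: comp_connected.
      - by apply: acyclic_mono acT; [apply: subsetT | move=> x y; rewrite /induced /= => /and3P[]].
      - by move=> x; rewrite /induced /= ie.
    move=> m hm /two_pieces /(_ hm) [W0 [F0 [W1 [F1 [[s0 t0 n0] [s1 t1 n1] dW]]]]].
    have irrB : forall x y, induced e B x y -> x != y.
      by move=> x y; rewrite /induced /= => /and3P[/e_neq].
    have gen : forall W F', subgraph W F' B (induced e B) -> is_tree W F' ->
        nedges W F' = k -> v \notin W -> False.
      move=> W F' sW tW nW nvW.
      have [w [wN sWC]] := piece_sub euv sW tW nvW.
      have := piece_big irrB sW tW nW.
      by move=> /leq_trans /(_ (subset_leq_card sWC)); rewrite ltnNge small.
    case: (boolP (v \in W0)) => [vW0|nv0]; last exact: gen s0 t0 n0 nv0.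
    apply: gen s1 t1 n1 _; apply/negP => vW1.
    by move: dW => /disjointFr /(_ vW0); rewrite vW1.
have [x [y [_ _ nxy]]] : exists x y, [/\ x \in [set: T], y \in [set: T] & x != y].
  by apply/card_gt1P; rewrite cardsT; lia.
have [z exz] : exists z, e x z.
  have /connectP[p pp yl] := conT (in_setT x) (in_setT y).
  case: p pp yl => [_ yx|z p /= /andP[exz _] _]; first by move: nxy; rewrite yx eqxx.
  by exists z; move: exz; rewrite /induced /= => /andP[].
have smallT : #|T| <= k + k.
  rewrite -cardsT.
  have sub : [set: T] \subset comp x z :|: comp z x.
    by apply/subsetP => w _; rewrite inE comp_cover.
  apply: leq_trans (subset_leq_card sub) _; apply: leq_trans (leq_card_setU _ _) _.
  have := none (x, z); have := none (z, x); rewrite /= exz se exz /= => /negbT h1 /negbT h2.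
  by apply: leq_add; rewrite leqNgt.
exists [set: T], e; split.
- split; first by split; [apply: subsetT | split => // a b ->; rewrite !in_setT].
  by split => //; left.
- rewrite cardsT; apply: leq_trans smallT _.
  have : 2 <= s - 1 by lia.
  move=> h2; have : 2 * k <= (s - 1) * k by exact: leq_mul.
  lia.
- apply: tau_one; last by rewrite cardsT; lia.
    by apply: packing1 => //; rewrite cardsT.
  move=> m hm /two_pieces /(_ hm) [W0 [F0 [W1 [F1 [[s0 t0 n0] [s1 t1 n1] dW]]]]].
  have irrT : forall x y, e x y -> x != y by move=> a b /e_neq.
  have h0 := piece_big irrT s0 t0 n0; have h1 := piece_big irrT s1 t1 n1.
  have := max_card (mem (W0 :|: W1)).
  rewrite cardsU (disjoint_setI0 dW) cards0 subn0; lia.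
Qed.
End Tree.
End G.

Theorem lemma7p1 (T : finType) (e : rel T) (s k : nat) :
  3 <= s -> 1 <= k ->
  symmetric e -> irreflexive e -> is_tree [set: T] e ->
  (forall v : T, #|[set u | e v u]| <= s) ->
  k.+1 <= #|T| ->
  exists (S : {set T}) (F : rel T),
    [/\ branch e S F, #|S| <= (s - 1) * k + 1 & tau k S F = 1].
Proof.
move=> s3 k1 se ie tr hdeg hk.
have [_ [conT acT]] := tr.
exact: (main se ie conT acT s3 k1 tr hdeg hk).
Qed.
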